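(* Let $\Omega\subset\mathbb{R}^d$ be a bounded open set, $\mathcal{O}\subset\mathbb{R}^d$ a nonempty open set and $\mathfrak{B}\in W^{1,\infty}(\mathbb{R}^d)^d$ (independent of time). Assume that for every $x_0\in\overline{\Omega}$ there exists $t\in(-\infty,0)$ with $\Phi(t,0,x_0)\in\mathcal{O}$. Then there exist $T_0>0$ and $r_0>0$ such that, for all $T>T_0$, $(T,T_0,r_0,\mathfrak{B},\Omega)$ satisfies the flushing condition for $\mathcal{O}$.
   Context: $\Phi(t,t_0,x_0)$ denotes the solution of $\frac{d}{dt}\Phi(t,t_0,x_0)=\mathfrak{B}(\Phi(t,t_0,x_0))$, $\Phi(t_0,t_0,x_0)=x_0$. Given $T>0$, $T_0\in(0,T)$, $r_0>0$ and a nonempty open $\mathcal{O}\subset\mathbb{R}^d$, we say $(T,T_0,r_0,\mathfrak{B},\Omega)$ satisfies the flushing condition for $\mathcal{O}$ if: for all $x_0\in\overline{\Omega}$ and all $t_0\in[T_0,T]$ there exists $t\in(t_0-T_0,t_0)$ such that $\Phi(t,t_0,x)\in\mathcal{O}$ for all $x\in\overline{B}(x_0,r_0)$ (closed ball). *)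

(* Defs.v *)
From HB Require Import structures.
From mathcomp Require Import all_boot all_order all_algebra.
From mathcomp Require Import all_classical all_reals all_analysis.
Set Implicit Arguments. Unset Strict Implicit. Unset Printing Implicit Defensive.
Import Order.TTheory GRing.Theory Num.Theory.
Import numFieldNormedType.Exports.
Local Open Scope classical_set_scope.
Local Open Scope ring_scope.

Definition enorm (R : realType) (d : nat) (x : 'rV[R]_d) : R :=
  Num.sqrt (\sum_(i < d) (x ord0 i) ^+ 2).

Definition cball (R : realType) (d : nat) (x : 'rV[R]_d) (r : R) : set 'rV[R]_d :=
  [set y | enorm (y - x) <= r].

(* B in W^{1,oo}(R^d)^d : bounded and (globally) Lipschitz vector field. *)
Definition W1inf (R : realType) (d : nat) (B : 'rV[R]_d -> 'rV[R]_d) : Prop :=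
  (exists M : R, forall x, enorm (B x) <= M) /\
  (exists L : R, forall x y, enorm (B x - B y) <= L * enorm (x - y)).

Definition is_flow (R : realType) (d : nat) (B : 'rV[R]_d -> 'rV[R]_d)
  (Phi : R -> R -> 'rV[R]_d -> 'rV[R]_d) : Prop :=
  forall (t0 : R) (x0 : 'rV[R]_d),
    Phi t0 t0 x0 = x0 /\
    forall t : R, is_derive t 1 (fun s => Phi s t0 x0) (B (Phi t t0 x0)).

(* Flushing condition for O of (T, T0, r0, B, Omega), B entering through its flow Phi. *)
Definition flushing (R : realType) (d : nat) (T T0 r0 : R)
  (Phi : R -> R -> 'rV[R]_d -> 'rV[R]_d) (Omega O : set 'rV[R]_d) : Prop :=
  forall x0, closure Omega x0 ->
  forall t0, T0 <= t0 <= T ->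
  exists t, t0 - T0 < t < t0 /\ forall x, cball x0 r0 x -> O (Phi t t0 x).

(* Main.v *)
Require Import Defs.
From HB Require Import structures.
From mathcomp Require Import all_boot all_order all_algebra.
From mathcomp Require Import all_classical all_reals all_analysis.
From mathcomp Require Import ring lra.
Import Order.TTheory GRing.Theory Num.Theory.
Import numFieldNormedType.Exports.
Local Open Scope classical_set_scope.
Local Open Scope ring_scope.

Section S.
Variables (R : realType) (d : nat).
Implicit Types (v : 'rV[R]_d).

Lemma sumsq_ge0 v : 0 <= \sum_(i < d) (v ord0 i) ^+ 2.
Proof. by apply: sumr_ge0 => i _; rewrite sqr_ge0. Qed.

Lemma enorm_sq v : enorm v ^+ 2 = \sum_(i < d) (v ord0 i) ^+ 2.
Proof. by rewrite /enorm sqr_sqrtr // sumsq_ge0. Qed.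

Lemma enorm_ge0 v : 0 <= enorm v.
Proof. exact: sqrtr_ge0. Qed.

Lemma comp_le_enorm v i : `|v ord0 i| <= enorm v.
Proof.
rewrite -(sqrtr_sqr (v ord0 i)) /enorm ler_sqrt ?sumsq_ge0 //.
rewrite (bigD1 i) //= lerDl; apply: sumr_ge0 => j _; exact: sqr_ge0.
Qed.

Lemma comp_le_norm v i : `|v ord0 i| <= `|v|.
Proof.
rewrite [leRHS]/Num.Def.normr/= mx_normrE.
have := @le_bigmax _ _ _ 0 (fun ij : 'I_1 * 'I_d => `|v ij.1 ij.2|) (ord0, i).
by apply.
Qed.

Lemma norm_le_enorm v : `|v| <= enorm v.
Proof.
rewrite [leLHS]/Num.Def.normr/= mx_normrE.
apply: bigmax_le; first exact: enorm_ge0.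
move=> [a j] _ /=; rewrite (ord1 a); exact: comp_le_enorm.
Qed.

Lemma enorm_le_norm v : enorm v <= (d.+1)%:R * `|v|.
Proof.
have n0 : 0 <= (d.+1)%:R * `|v| by rewrite mulr_ge0.
rewrite -(ger0_norm n0) -sqrtr_sqr /enorm ler_sqrt ?sqr_ge0 //.
apply: (@le_trans _ _ (\sum_(i < d) `|v| ^+ 2)).
  apply: ler_sum => i _; rewrite -real_normK ?num_real //.
  rewrite lerXn2r ?nnegrE //; exact: comp_le_norm.
rewrite sumr_const card_ord exprMn -[_ *+ d]mulr_natl.
rewrite ler_wpM2r ?sqr_ge0 // -natrX ler_nat.
by apply: (@leq_trans d.+1) => //; rewrite -{1}(expn1 d.+1) leq_pexp2l.
Qed.


Lemma is_derive_entry (f : R -> 'rV[R]_d) (t : R) (D : 'rV[R]_d) (i : 'I_d) :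
  is_derive t 1 f D -> is_derive t 1 (fun s => f s ord0 i) (D ord0 i).
Proof.
case=> df <-.
have dfi := (derivable_mxP f t 1).1 df ord0 i.
by apply: DeriveDef => //; rewrite derive_mx // mxE.
Qed.

Lemma is_derive_expM (c t : R) :
  is_derive t 1 (fun s => expR (c * s)) (expR (c * t) * c).
Proof.
have h1 : is_derive t 1 (fun s : R => c * s) c.
  have h := @is_deriveM R R (cst c) id t 1 0 1 (is_derive_cst _ _ _) (is_derive_id _ _).
  have -> : (fun s : R => c * s) = (cst c * id)%R by [].
  apply: (is_derive_eq h).
  by rewrite /= scaler0 addr0 /GRing.scale /= mulr1.
exact: (@is_derive1_comp _ expR (fun s => c * s) t).
Qed.

Lemma derivable_cont (f : R -> R) (df : R -> R) :
  (forall x : R, is_derive x 1 f (df x)) -> continuous f.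
Proof.
move=> H x; apply: differentiable_continuous; apply/derivable1_diffP.
by case: (H x).
Qed.

Lemma nincr_of_derive (f df : R -> R) a b : a <= b ->
  (forall x : R, is_derive x 1 f (df x)) -> (forall x, df x <= 0) -> f b <= f a.
Proof.
move=> ab Hd Hle.
have cf := @derivable_cont f df Hd.
have [c _ E] : exists2 c, c \in `[a, b]%R & f b - f a = df c * (b - a).
  by apply: MVT_segment => //; exact: continuous_subspaceT.
rewrite -subr_le0 E; apply: mulr_le0_ge0 => //; by rewrite subr_ge0.
Qed.


Lemma ndecr_of_derive (f df : R -> R) a b : a <= b ->
  (forall x : R, is_derive x 1 f (df x)) -> (forall x, 0 <= df x) -> f a <= f b.
Proof.
move=> ab Hd Hle.
have cf := @derivable_cont f df Hd.
have [c _ E] : exists2 c, c \in `[a, b]%R & f b - f a = df c * (b - a).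
  by apply: MVT_segment => //; exact: continuous_subspaceT.
rewrite -subr_ge0 E; apply: mulr_ge0 => //; by rewrite subr_ge0.
Qed.

Lemma term_bound (K h k : R) : 0 < K -> K * `|2 * h * k| <= K ^+ 2 * h ^+ 2 + k ^+ 2.
Proof.
move=> K0.
rewrite -(real_normK (num_real h)) -(real_normK (num_real k)) !normrM (@ger0_norm _ 2) //.
have := normr_ge0 h; have := normr_ge0 k.
set a := `|h|; set b := `|k| => b0 a0.
have := sqr_ge0 (K * a - b); nra.
Qed.

Section Gronwall.
Variables (B : 'rV[R]_d -> 'rV[R]_d) (K : R).
Hypothesis K0 : 0 < K.
Hypothesis HL : forall x y, enorm (B x - B y) <= K * enorm (x - y).
Variables f g : R -> 'rV[R]_d.
Hypothesis Hf : forall s : R, is_derive s 1 f (B (f s)).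
Hypothesis Hg : forall s : R, is_derive s 1 g (B (g s)).

Let h (i : 'I_d) s := f s ord0 i - g s ord0 i.
Let k (i : 'I_d) s := B (f s) ord0 i - B (g s) ord0 i.
Let phi s := \sum_(i < d) h i s ^+ 2.
Let dphi s := \sum_(i < d) 2 * h i s * k i s.

Lemma h_derive i (s : R) : is_derive s 1 (h i) (k i s).
Proof.
have -> : h i = (fun s => f s ord0 i) - (fun s => g s ord0 i) by [].
apply: is_deriveB; exact: is_derive_entry.
Qed.

Lemma phi_derive (s : R) : is_derive s 1 phi (dphi s).
Proof.
have -> : phi = \sum_(i < d) (fun s => h i s ^+ 2).
  by rewrite fct_sumE.
apply: is_derive_sum => i.
have -> : (fun s => h i s ^+ 2) = (h i) ^+ 2.
  by apply/funext => x; rewrite /= !expr2.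
have H := @is_deriveX R R (h i) 2 s 1 (k i s) (h_derive i s).
apply: (is_derive_eq H).
by rewrite /GRing.scale /= expr1.
Qed.

Lemma phiE s : phi s = enorm (f s - g s) ^+ 2.
Proof. by rewrite enorm_sq; apply: eq_bigr => i _; rewrite !mxE. Qed.

Lemma dphi_bound s : `|dphi s| <= 2 * K * phi s.
Proof.
have H1 : K * `|dphi s| <= K ^+ 2 * phi s + \sum_(i < d) k i s ^+ 2.
  rewrite /dphi /phi mulr_sumr -big_split /=.
  apply: (le_trans (ler_wpM2l (ltW K0) (ler_norm_sum _ _ _))).
  rewrite mulr_sumr; apply: ler_sum => i _; exact: term_bound.
have H2 : \sum_(i < d) k i s ^+ 2 <= K ^+ 2 * phi s.
  have -> : \sum_(i < d) k i s ^+ 2 = enorm (B (f s) - B (g s)) ^+ 2.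
    by rewrite enorm_sq; apply: eq_bigr => i _; rewrite !mxE.
  by rewrite phiE -exprMn lerXn2r ?nnegrE;
    do ?[done | exact: HL | exact: enorm_ge0 | exact: mulr_ge0 (ltW K0) (enorm_ge0 _)].
have : K * `|dphi s| <= K * (2 * K * phi s).
  have E : K * (2 * K * phi s) = K ^+ 2 * phi s + K ^+ 2 * phi s by ring.
  by rewrite E; apply: le_trans H1 _; rewrite lerD2l.
by rewrite ler_pM2l.
Qed.


Lemma psi_derive (c x : R) : is_derive x 1 (fun s => expR (c * s) * phi s)
  (expR (c * x) * dphi x + phi x * (expR (c * x) * c)).
Proof.
have -> : (fun s => expR (c * s) * phi s) = (fun s => expR (c * s)) * phi by [].
have H := is_deriveM (is_derive_expM c x) (phi_derive x).
by apply: (is_derive_eq H); rewrite /GRing.scale /=.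
Qed.

Lemma phi_gronwall a t : phi t <= expR (2 * K * `|t - a|) * phi a.
Proof.
case: (leP a t) => [hat|hta].
- pose c := - (2 * K).
  have := @nincr_of_derive _ _ a t hat (psi_derive c) _.
  move=> /(_ _) H.
  have {}H : expR (c * t) * phi t <= expR (c * a) * phi a.
    apply: H => x; have := dphi_bound x; have := expR_gt0 (c * x).
    have := ler_norm (dphi x); rewrite /c.
    set E := expR _; set p := phi x; set q := dphi x => h1 h2 h3; nra.
  have e1 : expR (2 * K * t) * expR (c * t) = 1.
    by rewrite -expRD /c mulNr addrN expR0.
  have e2 : expR (2 * K * `|t - a|) = expR (2 * K * t) * expR (c * a).
    by rewrite -expRD ger0_norm ?subr_ge0 //; congr expR; rewrite /c; ring.
  have -> : phi t = expR (2 * K * t) * (expR (c * t) * phi t) by rewrite mulrA e1 mul1r.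
  by apply: le_trans (ler_wpM2l (expR_ge0 _) H) _; rewrite e2 mulrA.
- pose c := 2 * K.
  have := @ndecr_of_derive _ _ t a (ltW hta) (psi_derive c) _.
  move=> /(_ _) H.
  have {}H : expR (c * t) * phi t <= expR (c * a) * phi a.
    apply: H => x; have := dphi_bound x; have := expR_gt0 (c * x).
    have := ler_norm (- dphi x); rewrite normrN /c.
    set E := expR _; set p := phi x; set q := dphi x => h1 h2 h3; nra.
  have e1 : expR (- (2 * K) * t) * expR (c * t) = 1.
    by rewrite -expRD /c mulNr addNr expR0.
  have e2 : expR (2 * K * `|t - a|) = expR (- (2 * K) * t) * expR (c * a).
    rewrite -expRD ltr0_norm ?subr_lt0 //; congr expR; rewrite /c; ring.
  have -> : phi t = expR (- (2 * K) * t) * (expR (c * t) * phi t) by rewrite mulrA e1 mul1r.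
  by apply: le_trans (ler_wpM2l (expR_ge0 _) H) _; rewrite e2 mulrA.
Qed.

Lemma enorm_gronwall a t :
  enorm (f t - g t) <= expR (K * `|t - a|) * enorm (f a - g a).
Proof.
rewrite -ler_sqr ?nnegrE ?mulr_ge0 ?expR_ge0 ?enorm_ge0 //.
rewrite exprMn -!phiE.
have -> : expR (K * `|t - a|) ^+ 2 = expR (2 * K * `|t - a|).
  by rewrite expr2 -expRD; congr expR; ring.
exact: phi_gronwall.
Qed.

End Gronwall.

Lemma is_derive_shiftv (F : R -> 'rV[R]_d) (c s : R) (D : 'rV[R]_d) :
  is_derive (s - c) 1 F D -> is_derive s 1 (fun u => F (u - c)) D.
Proof.
case=> dF <-.
have E : (fun h : R => h^-1 *: ((fun u => F (u - c)) (h *: 1 + s) - (fun u => F (u - c)) s))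
   = (fun h : R => h^-1 *: (F (h *: 1 + (s - c)) - F (s - c))).
  by apply/funext => h /=; rewrite addrA.
apply: DeriveDef.
  by move: dF; rewrite /derivable E.
by rewrite /derive E.
Qed.

Lemma enorm0_eq v : enorm v <= 0 -> v = 0.
Proof.
move=> H; apply/eqP; rewrite -normr_le0; exact: le_trans (norm_le_enorm v) H.
Qed.

End S.

Lemma bounded_closure_rV (R : realType) d (A : set 'rV[R]_d) :
  bounded_set A -> bounded_set (closure A).
Proof.
move=> [M [Mr HM]]; exists M; split => // N MN.
have sub : A `<=` closed_ball_ Num.norm (0 : 'rV[R]_d) N.
  by move=> x Ax; rewrite /closed_ball_ /= sub0r normrN; exact: HM.
move=> x /(closureS sub) /closed_closed_ball_.
by rewrite /closed_ball_ /= sub0r normrN.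
Qed.

Theorem proposition2p1 (R : realType) (d : nat)
  (Omega O : set 'rV[R]_d) (B : 'rV[R]_d -> 'rV[R]_d)
  (Phi : R -> R -> 'rV[R]_d -> 'rV[R]_d) :
  open Omega -> bounded_set Omega ->
  open O -> O !=set0 ->
  W1inf B -> is_flow B Phi ->
  (forall x0, closure Omega x0 -> exists t : R, t < 0 /\ O (Phi t 0 x0)) ->
  exists T0 : R, exists r0 : R, 0 < T0 /\ 0 < r0 /\
    forall T : R, T0 < T -> flushing T T0 r0 Phi Omega O.
Proof.
move=> _ bOm oO _ [_ [L HL]] Hflow Hhit.
pose K := `|L| + 1.
have K0 : 0 < K by rewrite /K ltr_pwDr // normr_ge0.
have HK : forall x y, enorm (B x - B y) <= K * enorm (x - y).
  move=> x y; apply: le_trans (HL x y) _; apply: ler_wpM2r; first exact: enorm_ge0.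
  by rewrite /K; apply: le_trans (ler_norm L) _; rewrite lerDl.
have shift : forall t t0 x, Phi t t0 x = Phi (t - t0) 0 x.
  move=> t t0 x.
  have Hf : forall s : R, is_derive s 1 (fun s => Phi s t0 x) (B (Phi s t0 x)).
    by move=> s; case: (Hflow t0 x).
  have Hg : forall s : R, is_derive s 1 (fun s => Phi (s - t0) 0 x) (B (Phi (s - t0) 0 x)).
    by move=> s; apply: (@is_derive_shiftv R d (fun u => Phi u 0 x) t0 s); case: (Hflow 0 x).
  have := @enorm_gronwall R d B K K0 HK _ _ Hf Hg t0 t.
  rewrite subrr (proj1 (Hflow t0 x)) (proj1 (Hflow 0 x)) subrr.
  have -> : enorm (0 : 'rV[R]_d) = 0.
    by rewrite /enorm big1 ?sqrtr0 // => i _; rewrite mxE expr2 mulr0.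
  rewrite mulr0 => /enorm0_eq /eqP; rewrite subr_eq0 => /eqP.
  by [].
have cont : forall t x y, enorm (Phi t 0 y - Phi t 0 x) <= expR (K * `|t|) * enorm (y - x).
  move=> t x y.
  have Hf : forall s : R, is_derive s 1 (fun s => Phi s 0 y) (B (Phi s 0 y)).
    by move=> s; case: (Hflow 0 y).
  have Hg : forall s : R, is_derive s 1 (fun s => Phi s 0 x) (B (Phi s 0 x)).
    by move=> s; case: (Hflow 0 x).
  have := @enorm_gronwall R d B K K0 HK _ _ Hf Hg 0 t.
  by rewrite subr0 (proj1 (Hflow 0 x)) (proj1 (Hflow 0 y)).
set C := closure Omega.
have cC : compact C.
  apply: bounded_closed_compact; first exact: bounded_closure_rV.
  exact: closed_closure.
pose P := fun (N : R) (x' : 'rV[R]_d) => exists t : R, - N < t < 0 /\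
  forall y, enorm (y - x') <= N^-1 -> O (Phi t 0 y).
have HC : \forall N \near +oo, C `<=` P N.
  apply: (proj1 (compact_near_coveringP C) cC R (pinfty_nbhs R) P) => x Cx.
  case: (Hhit x Cx) => tx [tx0 Otx].
  case/nbhs_ballP: (oO _ Otx) => e e0 He.
  pose c := expR (K * `|tx|) * (d.+1)%:R.
  have c0 : 0 < c by rewrite /c mulr_gt0 ?expR_gt0 ?ltr0n.
  pose dl := e / (2 * c).
  have dl0 : 0 < dl by rewrite /dl divr_gt0 // mulr_gt0.
  rewrite /prop_near2.
  exists (ball x dl, [set N | Num.max (- tx) dl^-1 < N]).
    split => /=; first exact: nbhsx_ballx.
    by exists (Num.max (- tx) dl^-1); split; [exact: num_real | ].
  move=> [x' N] [/= bx hN]; rewrite /= in bx hN.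
  move: hN; rewrite gt_max => /andP[hN1 hN2].
  have N0 : 0 < N by apply: lt_trans hN2; rewrite invr_gt0.
  exists tx; split; first by apply/andP; split => //; rewrite ltrNl.
  move=> y hy; apply: He; rewrite -ball_normE /ball_ /= distrC.
  apply: (le_lt_trans (@norm_le_enorm R d _)).
  apply: (le_lt_trans (cont tx x y)).
  apply: (le_lt_trans (ler_wpM2l (expR_ge0 _) (@enorm_le_norm R d _))).
  rewrite mulrA -/c.
  have h1 : `|y - x'| < dl.
    apply: le_lt_trans (@norm_le_enorm R d _) _; apply: le_lt_trans hy _.
    by rewrite invf_plt ?posrE.
  have h2 : `|x' - x| < dl by move: bx; rewrite -ball_normE /ball_ /= distrC.
  have h3 : `|y - x| < dl + dl.
    by apply: le_lt_trans (ler_distD x' y x) _; apply: ltrD.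
  have -> : e = c * (dl + dl) by rewrite /dl; field; rewrite gt_eqF.
  by rewrite ltr_pM2l.
case: HC => M [Mr HM].
pose N := `|M| + 1.
have hMN : M < N by rewrite /N; apply: le_lt_trans (ler_norm M) _; rewrite ltrDl.
have N0 : 0 < N by rewrite /N ltr_pwDr.
have HCN := HM N hMN.
exists N, N^-1; split => //; split; first by rewrite invr_gt0.
move=> T _ x0 Cx0 t0 _.
case: (HCN x0 Cx0) => t [/andP[t1 t2] Ht].
exists (t0 + t); split.
  by apply/andP; split; lra.
move=> y hy; rewrite shift (_ : t0 + t - t0 = t); first exact: Ht.
by rewrite addrAC subrr add0r.
Qed.
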